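(* For every positive integer $\nu$, let $$C_{\nu}:=\sup_{t\in(0,1]}\frac{\left|1-\frac{(-1)^{\nu}T_{2\nu+1}(\sqrt{t})}{(2\nu+1)\sqrt{t}}\right|}{\sqrt{t}}.$$ Then $$\frac{1}{4}\leq\frac{C_{\nu}}{2\nu+1}\leq\frac{4}{9}.$$
   Context: $T_k$ denotes the Chebyshev polynomial of the first kind, defined by $T_0(t)=1$, $T_1(t)=t$, $T_{k+1}(t)=2tT_k(t)-T_{k-1}(t)$ for $k\ge 1$; equivalently $T_k(t)=\cos(k\arccos t)$ for $t\in[-1,1]$. *)

(* Defs.v *)
From Stdlib Require Import Reals Lra Lia.
Open Scope R_scope.

Fixpoint chebT (k : nat) (t : R) : R :=
  match k with
  | O => 1
  | S k' =>
      match k' with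
      | O => t
      | S k'' => 2 * t * chebT k' t - chebT k'' t
      end
  end.

Definition cnu_fun (nu : nat) (t : R) : R :=
  Rabs (1 - ((-1) ^ nu * chebT (2 * nu + 1) (sqrt t))
              / (INR (2 * nu + 1) * sqrt t)) / sqrt t.

Definition cnu_set (nu : nat) (y : R) : Prop :=
  exists t, 0 < t <= 1 /\ y = cnu_fun nu t.

(* Main.v *)
Require Import Defs.
From Stdlib Require Import Reals Lra Lia.
Open Scope R_scope.

Lemma f7 : INR (Factorial.fact 7) = 5040.
Proof. rewrite INR_IZR_INZ. reflexivity. Qed.
Lemma f5 : INR (Factorial.fact 5) = 120.
Proof. rewrite INR_IZR_INZ. reflexivity. Qed.
Lemma f3 : INR (Factorial.fact 3) = 6.
Proof. rewrite INR_IZR_INZ. reflexivity. Qed.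
Lemma f1 : INR (Factorial.fact 1) = 1.
Proof. reflexivity. Qed.

Lemma sin_b1 a : 0 <= a -> a <= PI -> a - a^3/6 <= sin a <= a - a^3/6 + a^5/120.
Proof.
  intros H1 H2. destruct (sin_bound a 0 H1 H2) as [L U].
  unfold sin_approx, sin_term in L, U. cbn [sum_f_R0 Nat.mul Nat.add] in L, U.
  rewrite f1,f3 in L. rewrite f1,f3,f5 in U. split; lra.
Qed.

Lemma sin_b3 a : 0 <= a -> a <= PI -> a - a^3/6 + a^5/120 - a^7/5040 <= sin a.
Proof.
  intros H1 H2. destruct (sin_bound a 1 H1 H2) as [L U].
  unfold sin_approx, sin_term in L, U. cbn [sum_f_R0 Nat.mul Nat.add] in L, U.
  rewrite f1,f3,f5,f7 in L. lra.
Qed.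

Lemma PI_gt3 : 3 < PI.
Proof. pose proof PI2_3_2. lra. Qed.

Lemma cheb_cos k th : chebT k (cos th) = cos (INR k * th).
Proof.
  assert (H : forall k, chebT k (cos th) = cos (INR k * th) /\
                        chebT (S k) (cos th) = cos (INR (S k) * th)).
  { clear k; intro k; induction k as [|k IH].
    - simpl. rewrite Rmult_0_l, cos_0, Rmult_1_l. auto.
    - destruct IH as [IH1 IH2]. split; [exact IH2|].
      change (chebT (S (S k)) (cos th)) with
        (2 * cos th * chebT (S k) (cos th) - chebT k (cos th)).
      rewrite IH1, IH2.
      replace (INR (S (S k)) * th) with (INR (S k) * th + th)
        by (rewrite !S_INR; ring).
      replace (INR k * th) with (INR (S k) * th - th) by (rewrite S_INR; ring).
      rewrite cos_plus, cos_minus. ring. }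
  apply H.
Qed.

Lemma cos_shift_nu nu a : cos (a + INR nu * PI) = (-1)^nu * cos a.
Proof.
  induction nu as [|nu IH].
  - simpl. rewrite Rmult_0_l, Rplus_0_r. ring.
  - rewrite S_INR. replace (a + (INR nu + 1) * PI) with ((a + INR nu * PI) + PI) by ring.
    rewrite neg_cos, IH. simpl. ring.
Qed.

Lemma cheb_sin nu phi :
  chebT (2*nu+1) (sin phi) = (-1)^nu * sin (INR (2*nu+1) * phi).
Proof.
  rewrite <- cos_shift, cheb_cos.
  replace (INR (2 * nu + 1) * (PI / 2 - phi)) with
     ((PI/2 - INR (2*nu+1) * phi) + INR nu * PI)
    by (rewrite plus_INR, mult_INR; simpl; field).
  rewrite cos_shift_nu, cos_shift. reflexivity.
Qed.

Lemma sin_mult_bound k phi : Rabs (sin (INR k * phi)) <= INR k * Rabs (sin phi).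
Proof.
  induction k as [|k IH].
  - simpl. rewrite Rmult_0_l, sin_0, Rabs_R0. lra.
  - rewrite S_INR. replace ((INR k + 1) * phi) with (INR k * phi + phi) by ring.
    rewrite sin_plus.
    eapply Rle_trans; [apply Rabs_triang|].
    rewrite !Rabs_mult.
    pose proof (Rabs_pos (sin (INR k * phi))).
    pose proof (Rabs_pos (sin phi)).
    assert (Rabs (cos phi) <= 1) by (apply Rabs_le; pose proof (COS_bound phi); lra).
    assert (Rabs (cos (INR k * phi)) <= 1) by (apply Rabs_le; pose proof (COS_bound (INR k * phi)); lra).
    nra.
Qed.

Lemma key_lower N phi : 5 <= N -> 0 < phi <= PI/2 ->
  N * sin phi - 4 * N^2 * (sin phi)^2 / 9 <= sin (N * phi).
Proof.
  intros HN [Hp0 Hp1].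
  pose proof PI_gt3 as Hpi.
  set (s := sin phi). set (u := N * phi).
  replace (N * s - 4 * N^2 * s^2/9) with ((N*s) - 4*(N*s)^2/9) by field.
  set (y := N * s).
  assert (Hu0 : 0 < u) by (unfold u; apply Rmult_lt_0_compat; lra).
  destruct (sin_b1 phi ltac:(lra) ltac:(lra)) as [F2 F1u].
  pose proof PI_4.
  assert (F1 : s <= phi).
  { assert (phi^2 <= 4) by nra. assert (0 <= phi^3) by (apply pow_le; lra).
    assert (phi^5 = phi^3 * phi^2) by ring. unfold s. nra. }
  assert (Hs0 : 0 < s) by (unfold s; apply sin_gt_0; lra).
  assert (Hy0 : 0 < y) by (unfold y; apply Rmult_lt_0_compat; lra).
  assert (Hyu : y <= u) by (unfold y, u; apply Rmult_le_compat_l; lra).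
  pose proof (SIN_bound u) as Hsb.
  destruct (Rle_dec 3 y) as [Hy3|Hy3].
  { assert (0 <= (4*y+3)*(y-3)) by (apply Rmult_le_pos; lra).
    assert ((4*y+3)*(y-3) = 4*y^2 - 9*y - 9) by ring. lra. }
  apply Rnot_le_lt in Hy3.
  assert (Hh : y - 4*y^2/9 <= 9/16).
  { assert (0 <= (y - 9/8)^2) by apply pow2_ge_0.
    assert ((y-9/8)^2 = y^2 - 9/4*y + 81/64) by field. lra. }
  destruct (Rle_dec u (9/8)) as [HuB|HuB].
  { destruct (sin_b1 u ltac:(lra) ltac:(lra)) as [L _].
    assert (y - 4*y^2/9 <= u - 4*u^2/9) by nra.
    assert (u - 4*u^2/9 <= u - u^3/6) by nra.
    lra. }
  apply Rnot_le_lt in HuB.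
  destruct (Rle_dec u (PI/2)) as [HuC|HuC].
  { assert (sin (9/8) <= sin u) by (apply sin_incr_1; lra).
    destruct (sin_b1 (9/8) ltac:(lra) ltac:(lra)) as [L _].
    lra. }
  apply Rnot_le_lt in HuC.
  destruct (Rle_dec u (49/20)) as [HuC2|HuC2].
  { assert (sin (49/20) <= sin u) by (apply sin_decr_1; lra).
    pose proof (sin_b3 (49/20) ltac:(lra) ltac:(lra)) as L.
    lra. }
  apply Rnot_le_lt in HuC2.
  assert (Hu33 : u < 33/10).
  { destruct (Rlt_dec u (33/10)) as [h|h]; [exact h|exfalso].
    apply Rnot_lt_le in h.
    set (a := 33/10 / N).
    assert (Ha0 : 0 < a) by (unfold a; apply Rdiv_lt_0_compat; lra).
    assert (Ha1 : a <= 33/50).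
    { unfold a. apply (Rmult_le_reg_r N); [lra|]. field_simplify; [|lra]. nra. }
    assert (Hap : a <= phi).
    { unfold a. apply (Rmult_le_reg_r N); [lra|]. field_simplify; [|lra].
      unfold u in h. lra. }
    assert (sin a <= s) by (unfold s; apply sin_incr_1; lra).
    destruct (sin_b1 a ltac:(lra) ltac:(lra)) as [L _].
    assert (HNa : N * a = 33/10) by (unfold a; field; lra).
    assert (N * (a - a^3/6) <= y) by (unfold y; nra).
    assert (N * (a - a^3/6) = 33/10 - (33/10)^3/(6*N^2)) by (unfold a; field; lra).
    assert ((33/10)^3/(6*N^2) <= (33/10)^3/150).
    { apply Rmult_le_compat_l; [lra|]. apply Rinv_le_contravar; nra. }
    lra. }
  assert (Hyl : u - u^3/(6*N^2) <= y).
  { unfold y, u. replace (N*phi - (N*phi)^3/(6*N^2)) with (N * (phi - phi^3/6)) by (field; lra).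
    apply Rmult_le_compat_l; [lra| unfold s; lra]. }
  assert (Hyl2 : u * (1 - (33/10)^2/150) <= y).
  { assert (u^3/(6*N^2) <= u * (33/10)^2/150).
    { unfold Rdiv. rewrite Rinv_mult.
      assert (/N^2 <= /25) by (apply Rinv_le_contravar; nra).
      assert (0 < /N^2) by (apply Rinv_0_lt_compat; nra).
      assert (u^3 <= u * (33/10)^2) by nra.
      nra. }
    lra. }
  destruct (Rle_dec u PI) as [HuD|HuD].
  { assert (0 <= sin u) by (apply sin_ge_0; lra). nra. }
  apply Rnot_le_lt in HuD.
  assert (sin u = - sin (u - PI)).
  { replace u with ((u - PI) + PI) at 1 by ring. apply neg_sin. }
  destruct (sin_b1 (u - PI) ltac:(lra) ltac:(lra)) as [_ U].
  assert (sin (u - PI) <= u - PI).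
  { assert ((u-PI)^2 <= 4) by nra. assert (0 <= (u-PI)^3) by (apply pow_le; lra).
    assert ((u-PI)^5 = (u-PI)^3 * (u-PI)^2) by ring. nra. }
  assert (26/10 <= y) by lra.
  assert (0 <= (y-26/10)*(4*y+14/10)) by (apply Rmult_le_pos; lra).
  assert ((y-26/10)*(4*y+14/10) = 4*y^2 - 9*y - 364/100) by field.
  lra.
Qed.

Lemma sgn2 nu : (-1)^nu * (-1)^nu = 1.
Proof. rewrite <- Rpow_mult_distr. replace (-1 * -1) with 1 by ring. apply pow1. Qed.

Lemma bound_Q nu x : (1 <= nu)%nat -> 0 < x <= 1 ->
  let N := INR (2*nu+1) in
  let Q := (-1)^nu * chebT (2*nu+1) x in
  N * x - 4 * N^2 * x^2 / 9 <= Q <= N * x + 4 * N^2 * x^2 / 9.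
Proof.
  intros Hnu [Hx0 Hx1] N Q.
  destruct (Nat.eq_dec nu 1) as [E|E].
  { subst nu. unfold Q, N. simpl chebT.
    replace (INR (2*1+1)) with 3 by (simpl; ring).
    assert (x^3 <= x^2) by (simpl; nra). assert (0 <= x^2) by nra.
    split; simpl; nra. }
  assert (HN : 5 <= N).
  { unfold N. replace 5 with (INR 5) by (simpl; ring). apply le_INR. lia. }
  set (phi := asin x).
  assert (Hs : sin phi = x) by (unfold phi; apply sin_asin; lra).
  pose proof (asin_bound x) as Hb. fold phi in Hb.
  pose proof PI2_3_2.
  assert (Hp0 : 0 < phi).
  { destruct (Rlt_dec 0 phi) as [h|h]; [exact h|].
    assert (sin phi <= sin 0) by (apply sin_incr_1; lra).
    rewrite sin_0 in H0. lra. }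
  assert (HQ : Q = sin (N * phi)).
  { unfold Q. rewrite <- Hs, cheb_sin. fold N. rewrite <- Rmult_assoc, sgn2. ring. }
  rewrite HQ. split.
  - rewrite <- Hs. apply key_lower; lra.
  - pose proof (sin_mult_bound (2*nu+1) phi) as B. fold N in B.
    rewrite Hs, (Rabs_pos_eq x) in B by lra.
    pose proof (Rle_abs (sin (N * phi))).
    assert (0 <= 4 * N^2 * x^2 / 9).
    { unfold Rdiv. apply Rmult_le_pos; [|lra]. apply Rmult_le_pos; [|nra]. nra. }
    lra.
Qed.

Lemma fun_bound nu t : (1 <= nu)%nat -> 0 < t <= 1 ->
  cnu_fun nu t <= 4 * INR (2*nu+1) / 9.
Proof.
  intros Hnu [Ht0 Ht1].
  set (x := sqrt t).
  assert (Hx0 : 0 < x) by (apply sqrt_lt_R0; lra).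
  assert (Hx1 : x <= 1) by (unfold x; rewrite <- sqrt_1; apply sqrt_le_1_alt; lra).
  pose proof (bound_Q nu x Hnu (conj Hx0 Hx1)) as B. cbv zeta in B.
  set (N := INR (2*nu+1)) in *.
  set (Q := (-1)^nu * chebT (2*nu+1) x) in *.
  assert (HN : 3 <= N).
  { unfold N. replace 3 with (INR 3) by (simpl; ring). apply le_INR. lia. }
  unfold cnu_fun. fold x. fold N. fold Q.
  set (z := 1 - Q / (N * x)).
  assert (Hz : z * (N * x) = N * x - Q) by (unfold z; field; lra).
  assert (HNx : 0 < N * x) by nra.
  assert (Hza : Rabs z * (N * x) <= 4 * N^2 * x^2 / 9).
  { rewrite <- (Rabs_pos_eq (N*x)) by lra. rewrite <- Rabs_mult, Hz.
    apply Rabs_le. lra. }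
  assert (Hz2 : Rabs z <= 4 * N * x / 9).
  { apply (Rmult_le_reg_r (N*x)); [lra|].
    replace (4 * N * x / 9 * (N * x)) with (4 * N^2 * x^2 / 9) by field. exact Hza. }
  set (w := Rabs z / x).
  assert (Hw : w * x = Rabs z) by (unfold w; field; lra).
  apply (Rmult_le_reg_r x); [lra|]. rewrite Hw.
  replace (4 * N / 9 * x) with (4 * N * x / 9) by field. exact Hz2.
Qed.

Theorem mainTheorem1 (nu : nat) (hnu : (1 <= nu)%nat) :
  exists C : R, is_lub (cnu_set nu) C /\
    1 / 4 <= C / INR (2 * nu + 1) <= 4 / 9.
Proof.
  set (N := INR (2*nu+1)).
  assert (HN : 3 <= N).
  { unfold N. replace 3 with (INR 3) by (simpl; ring). apply le_INR. lia. }
  assert (Hb : bound (cnu_set nu)).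
  { exists (4 * N / 9). intros y [t [Ht ->]]. apply fun_bound; auto. }
  assert (Hne : exists y, cnu_set nu y).
  { exists (cnu_fun nu 1). exists 1. split; [lra|reflexivity]. }
  destruct (completeness _ Hb Hne) as [C [HC1 HC2]].
  exists C. split; [split; assumption|].
  pose proof PI_gt3 as Hpi. pose proof PI_4.
  set (phi := PI / N).
  assert (Hp0 : 0 < phi) by (unfold phi; apply Rdiv_lt_0_compat; lra).
  assert (Hp1 : phi <= PI / 3).
  { unfold phi. unfold Rdiv. apply Rmult_le_compat_l; [lra|]. apply Rinv_le_contravar; lra. }
  assert (HNp : N * phi = PI) by (unfold phi; field; lra).
  set (x0 := sin phi).
  assert (Hx0 : 0 < x0) by (unfold x0; apply sin_gt_0; lra).
  destruct (sin_b1 phi ltac:(lra) ltac:(lra)) as [_ U].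
  assert (Hx0p : x0 <= phi).
  { assert (phi^2 <= 4) by nra. assert (0 <= phi^3) by (apply pow_le; lra).
    assert (phi^5 = phi^3 * phi^2) by ring. unfold x0. nra. }
  assert (Hx01 : x0 <= 1) by (unfold x0; pose proof (SIN_bound phi); lra).
  assert (Hmem : cnu_set nu (1 / x0)).
  { exists (x0^2). split.
    - split; [nra|]. nra.
    - unfold cnu_fun. rewrite sqrt_pow2 by lra. unfold x0. rewrite cheb_sin.
      fold N. rewrite HNp, sin_PI. fold x0.
      replace (1 - (-1)^nu * ((-1)^nu * 0) / (N * x0)) with 1 by (field; lra).
      rewrite Rabs_R1. reflexivity. }
  assert (HC : 1 / x0 <= C) by (apply HC1; exact Hmem).
  assert (HCu : C <= 4 * N / 9).
  { apply HC2. intros y [t [Ht ->]]. apply fun_bound; auto. }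
  assert (H4 : N / 4 <= 1 / x0).
  { apply (Rmult_le_reg_r x0); [lra|].
    replace (1 / x0 * x0) with 1 by (field; lra).
    assert (N * phi <= 4) by lra. nra. }
  split.
  - apply (Rmult_le_reg_r N); [lra|]. replace (C / N * N) with C by (field; lra). lra.
  - apply (Rmult_le_reg_r N); [lra|]. replace (C / N * N) with C by (field; lra). lra.
Qed.
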